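(* Let $\mathbf{P}=(X,P)$ be a finite interval order, and let $\mathbf{I}$ be a distinguishing interval representation of $\mathbf{P}$ in which every interval has length $1$ except for one interval, whose length is between $0$ and $2$ inclusive. Then $\dim(\mathbf{P})\le 3$.
   Context: An interval representation of a poset $(X,P)$ assigns to each $x\in X$ a closed real interval $[l_x,r_x]$ such that $x<y$ in $P$ iff $r_x<l_y$; the length is $r_x-l_x$. A representation is distinguishing if no two intervals share an endpoint. The dimension $\dim(\mathbf{P})$ is the minimum number of linear extensions of $P$ whose intersection is $P$. *)

(* Defs.v *)
From HB Require Import structures.
From mathcomp Require Import all_boot all_order all_algebra.
From mathcomp Require Import reals.
Set Implicit Arguments. Unset Strict Implicit. Unset Printing Implicit Defensive.
Import Order.TTheory GRing.Theory Num.Theory.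
Local Open Scope ring_scope.

Definition interval_rep (R : realType) (X : finType) (lt : rel X)
    (l r : X -> R) : Prop :=
  (forall x, l x <= r x) /\ (forall x y, lt x y <-> r x < l y).

Definition distinguishing (R : realType) (X : finType) (l r : X -> R) : Prop :=
  forall x y, x != y ->
    [/\ l x != l y, r x != r y & l x != r y].

Definition linear_extension (X : finType) (lt L : rel X) : Prop :=
  [/\ (forall x, ~~ L x x),
      (forall x y z, L x y -> L y z -> L x z),
      (forall x y, x != y -> L x y || L y x)
    & (forall x y, lt x y -> L x y)].

Definition dim_le (X : finType) (lt : rel X) (k : nat) : Prop :=
  exists (t : nat) (L : 'I_t -> rel X),
    [/\ (t <= k)%N,
        (forall i, linear_extension lt (L i))
      & (forall x y, lt x y <-> (forall i, L i x y))].

(* Main.v *)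
Require Import Defs.
From HB Require Import structures.
From mathcomp Require Import all_boot all_order all_algebra.
From mathcomp Require Import reals lra.
Import Order.TTheory GRing.Theory Num.Theory.
Local Open Scope ring_scope.

Lemma keys3 (R : realType) (X : finType) (lt : rel X) (K1 K2 K3 : X -> R) :
  (forall x y, lt x y -> [/\ K1 x < K1 y, K2 x < K2 y & K3 x < K3 y]) ->
  (forall x y, x != y -> [/\ K1 x != K1 y, K2 x != K2 y & K3 x != K3 y]) ->
  (forall x y, x != y -> ~~ lt x y -> ~~ lt y x ->
     K1 y < K1 x \/ K2 y < K2 x \/ K3 y < K3 x) ->
  dim_le lt 3.
Proof.
move=> Hm Hi Hc.
pose K (i : 'I_3) := if val i == 0%N then K1 else if val i == 1%N then K2 else K3.
exists 3%N, (fun i x y => K i x < K i y); split => //.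
- move=> i; split.
  + by move=> x; rewrite ltxx.
  + by move=> x y z; apply: lt_trans.
  + move=> x y /Hi [h1 h2 h3]; apply: lt_total.
    by rewrite /K; case: ifP => _ //; case: ifP.
  + by move=> x y /Hm [h1 h2 h3]; rewrite /K; case: ifP => _ //; case: ifP.
- move=> x y; split.
  + by move=> /Hm [h1 h2 h3] i; rewrite /K; case: ifP => _ //; case: ifP.
  + move=> H.
    have H1 := H (@Ordinal 3 0 isT); have H2 := H (@Ordinal 3 1 isT);
      have H3 := H (@Ordinal 3 2 isT); rewrite /K /= in H1 H2 H3.
    case: (boolP (lt x y)) => // nxy.
    case: (eqVneq x y) => [exy|nexy]; first by rewrite exy ltxx in H1.
    case: (boolP (lt y x)) => [yx|nyx].
      by case: (Hm _ _ yx) => h1 _ _; have := lt_trans H1 h1; rewrite ltxx.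
    case: (Hc _ _ nexy nxy nyx) => [h|[h|h]].
    * by have := lt_trans H1 h; rewrite ltxx.
    * by have := lt_trans H2 h; rewrite ltxx.
    * by have := lt_trans H3 h; rewrite ltxx.
Qed.

Lemma int_tri (R : realType) (a b : int) :
  (a%:~R : R) + 1 <= b%:~R \/ (a%:~R : R) = b%:~R \/ (b%:~R : R) + 1 <= a%:~R.
Proof.
case: (ltgtP a b) => h.
- left; rewrite -[1]/(1%:~R) -intrD ler_int; by rewrite lezD1.
- right; right; rewrite -[1]/(1%:~R) -intrD ler_int; by rewrite lezD1.
- by right; left; rewrite h.
Qed.

Lemma flo (R : realType) (z : R) : (Num.floor z)%:~R <= z < (Num.floor z)%:~R + 1.
Proof. by rewrite -[1]/(1%:~R) -intrD; exact: floor_itv. Qed.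

Ltac dsplit := repeat match goal with H : _ \/ _ |- _ => destruct H | H : _ /\ _ |- _ => destruct H end.

Theorem theorem7p1 (R : realType) (X : finType) (lt : rel X)
    (l r : X -> R) (x0 : X) :
  (forall x, ~~ lt x x) ->
  (forall x y z, lt x y -> lt y z -> lt x z) ->
  interval_rep lt l r ->
  distinguishing l r ->
  0 <= r x0 - l x0 <= 2 ->
  (forall x, x != x0 -> r x - l x = 1) ->
  dim_le lt 3.
Proof.
move=> _ _ [_ Hrep] Hd /andP[Hl0 Hl2] H1.
have [lam elam] : {lam | r x0 - l x0 = lam} by exists (r x0 - l x0).
have hlam : r x0 = l x0 + lam by lra.
pose m x : R := (Num.floor ((l x - l x0)/2))%:~R.
pose w x := (l x - l x0) - 2 * m x.
have hw x : 0 <= w x /\ w x < 2.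
  by have /andP[a b] := flo _ ((l x - l x0)/2); rewrite /w /m; split; lra.
have hu x : l x = l x0 + 2 * m x + w x by rewrite /w; lra.
have hr x : x != x0 -> r x = l x + 1 by move/H1; lra.
have htri x y : m y + 1 <= m x \/ m y = m x \/ m x + 1 <= m y.
  by case: (int_tri R (Num.floor ((l y - l x0)/2)) (Num.floor ((l x - l x0)/2))) => [h|[h|h]]; rewrite /m; [left|right;left|right;right].
have hc x : m x + 1 <= -1 \/ m x = -1 \/ -1 + 1 <= m x.
  by have := int_tri R (Num.floor ((l x - l x0)/2)) (-1); rewrite /m (_ : (-1)%:~R = -1) //; rewrite rmorphN /=.
have hc0 x : m x + 1 <= 0 \/ m x = 0 \/ 0 + 1 <= m x.
  by have := int_tri R (Num.floor ((l x - l x0)/2)) 0; rewrite /m.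
have hd x y : x != y -> l x != l y /\ r x != r y /\ l x != r y /\ r x != l y.
  move=> nxy; have [a b c] := Hd x y nxy; rewrite eq_sym in nxy; have [a' b' c'] := Hd y x nxy.
  by do !split => //; rewrite eq_sym.
have hc4 x : m x <= -2 \/ m x = -1 \/ m x = 0 \/ 1 <= m x.
  by case: (hc x) => [h|[h|h]]; case: (hc0 x) => [h'|[h'|h']]; lra.
pose K1 x := if x == x0 then -7/2 else if w x < 1 then 4 * m x - w x else 4 * m x + 3 - w x.
pose K2 x := if x == x0 then (if lam <= 1 then -1/2 else lam - 1)
             else if w x < 1 then 2 * m x + w x else 2 * m x + w x - 1.
pose K3 x := if x == x0 then (if lam <= 1 then lam else 3/2)
             else if w x < 1 then 2 * m x + w x else 2 * m x + w x + 1.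
have hn x y : ~~ lt x y -> l y <= r x.
  by move=> h; rewrite leNgt; apply/negP => /Hrep; apply/negP.
apply: (@keys3 R X lt K1 K2 K3).
- move=> x y /Hrep.
  case: (eqVneq x x0) => [->|nx]; case: (eqVneq y x0) => [->|ny].
  + move=> *; exfalso; lra.
  + rewrite /K1 /K2 /K3 eqxx (negbTE ny).
    have := hu y; have := hw y; have := hr y ny; have := hc4 y.
    case: (ltP (w y) 1); case: (leP lam 1); move=> *; split; lra.
  + rewrite /K1 /K2 /K3 eqxx (negbTE nx).
    have := hu x; have := hw x; have := hr x nx; have := hc4 x.
    case: (ltP (w x) 1); case: (leP lam 1); move=> *; split; lra.
  + rewrite /K1 /K2 /K3 (negbTE nx) (negbTE ny).
    have := hu x; have := hw x; have := hr x nx; have := hu y; have := hw y; have := hr y ny.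
    have := htri x y.
    case: (ltP (w x) 1); case: (ltP (w y) 1); move=> *; split; lra.
- move=> x y nxy; have := hd x y nxy.
  case: (eqVneq x x0) => [ex|nx]; case: (eqVneq y x0) => [ey|ny].
  + by rewrite ex ey eqxx in nxy.
  + rewrite ex /K1 /K2 /K3 eqxx (negbTE ny).
    have := hu y; have := hw y; have := hr y ny; have := hc4 y.
    case: (ltP (w y) 1); case: (leP lam 1); move=> *; split; lra.
  + rewrite ey /K1 /K2 /K3 eqxx (negbTE nx).
    have := hu x; have := hw x; have := hr x nx; have := hc4 x.
    case: (ltP (w x) 1); case: (leP lam 1); move=> *; split; lra.
  + rewrite /K1 /K2 /K3 (negbTE nx) (negbTE ny).
    have := hu x; have := hw x; have := hr x nx; have := hu y; have := hw y; have := hr y ny.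
    have := htri x y.
    case: (ltP (w x) 1); case: (ltP (w y) 1); move=> *; split; lra.
- move=> x y nxy /hn hxy /hn hyx; have := hd x y nxy.
  case: (eqVneq x x0) => [ex|nx]; case: (eqVneq y x0) => [ey|ny].
  + by rewrite ex ey eqxx in nxy.
  + rewrite ex /K1 /K2 /K3 eqxx (negbTE ny); rewrite ex in hxy hyx.
    have := hu y; have := hw y; have := hr y ny; have := hc4 y.
    case: (ltP (w y) 1); case: (leP lam 1); move=> *; lra.
  + rewrite ey /K1 /K2 /K3 eqxx (negbTE nx); rewrite ey in hxy hyx.
    have := hu x; have := hw x; have := hr x nx; have := hc4 x.
    case: (ltP (w x) 1); case: (leP lam 1); move=> *; lra.
  + rewrite /K1 /K2 /K3 (negbTE nx) (negbTE ny).
    have := hu x; have := hw x; have := hr x nx; have := hu y; have := hw y; have := hr y ny.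
    have := htri x y.
    case: (ltP (w x) 1); case: (ltP (w y) 1); move=> *; lra.
Qed.
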